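(* Let $f=c_1\wedge\cdots\wedge c_m$ be a Boolean formula over the variables $x_1,\dots,x_n$, where each clause $c_j$ is a CNF clause, a cardinality constraint, an XOR clause, or a NAE clause. Let $F_f=\sum_{j=1}^m \mathrm{FE}_{c_j}$, viewed as a real polynomial on $[-1,1]^n$. Then $f$ is satisfiable if and only if $\min_{x\in[-1,1]^n}F_f(x)=-m$.
   Context: Boolean values are encoded as $\pm1$, with $-1$ standing for True and $+1$ for False; a negated literal $\neg x_i$ corresponds to $-x_i$. The clause types are as follows. - A CNF clause is a disjunction of literals. - A cardinality constraint $D^{\ge k}(L)$ (respectively $D^{\le k}(L)$) on a set $L$ of variables requires at least (respectively at most) $k$ of them to be True. - An XOR clause requires an odd number of its variables to be True. - A NAE clause requires that not all of its variables take the same value. Each clause $c$ is a function $\{\pm1\}^n\to\{\pm1\}$, with value $-1$ exactly when $c$ is satisfied. $\mathrm{FE}_c$ denotes its Fourier expansion: the unique multilinear polynomial $\sum_{S\subseteq[n]}\widehat c(S)\prod_{i\in S}x_i$ that agrees with $c$ on $\{\pm1\}^n$, where $\widehat c(S)=\mathbb{E}_{x\sim\{\pm1\}^n}[c(x)\prod_{i\in S}x_i]$. *)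

(* Defs.v *)
From HB Require Import structures.
From mathcomp Require Import all_boot all_order all_algebra.
From mathcomp Require Import reals.
Set Implicit Arguments. Unset Strict Implicit. Unset Printing Implicit Defensive.
Import Order.TTheory GRing.Theory Num.Theory.
Local Open Scope ring_scope.

(* A Boolean assignment: a i = true means x_i is True (encoded as -1). *)
Definition assignment (n : nat) := {ffun 'I_n -> bool}.

Definition pm1 {R : ringType} (b : bool) : R := if b then -1 else 1.

(* A literal (i, neg): the variable x_i if neg = false, its negation if neg = true. *)
Definition literal (n : nat) := ('I_n * bool)%type.
Definition lit_true n (a : assignment n) (l : literal n) : bool := a l.1 != l.2.

Inductive clause (n : nat) : Type :=
| CNF of seq (literal n)
| AtLeast of nat & {set 'I_n}
| AtMost of nat & {set 'I_n}
| XOR of {set 'I_n}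
| NAE of {set 'I_n}.

Definition num_true n (a : assignment n) (L : {set 'I_n}) : nat :=
  #|[set i in L | a i]|.

Definition clause_sat n (c : clause n) (a : assignment n) : bool :=
  match c with
  | CNF ls => has (lit_true a) ls
  | AtLeast k L => (k <= num_true a L)%N
  | AtMost k L => (num_true a L <= k)%N
  | XOR L => odd (num_true a L)
  | NAE L => [exists i in L, a i] && [exists i in L, ~~ a i]
  end.

Definition clause_val {R : ringType} n (c : clause n) (a : assignment n) : R :=
  pm1 (clause_sat c a).

Definition fourier_coef {R : fieldType} n (c : clause n) (S : {set 'I_n}) : R :=
  (2 ^ n)%:R^-1 *
  \sum_(a : assignment n) clause_val c a * \prod_(i in S) pm1 (a i).

Definition FE {R : fieldType} n (c : clause n) (x : 'I_n -> R) : R :=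
  \sum_(S : {set 'I_n}) fourier_coef c S * \prod_(i in S) x i.

Definition F_f {R : fieldType} n (f : seq (clause n)) (x : 'I_n -> R) : R :=
  \sum_(c <- f) FE c x.

Definition satisfiable n (f : seq (clause n)) : Prop :=
  exists a : assignment n, all (fun c => clause_sat c a) f.

Definition in_cube {R : realType} n (x : 'I_n -> R) : Prop :=
  forall i, -1 <= x i <= 1.

(* Main.v *)
Require Import Defs.
From HB Require Import structures.
From mathcomp Require Import all_boot all_order all_algebra.
From mathcomp Require Import reals ring lra.
Import Order.TTheory GRing.Theory Num.Theory.
Local Open Scope ring_scope.

Section S.
Variable R : realType.
Variable n : nat.

Definition w (b : assignment n) (x : 'I_n -> R) : R :=
  \prod_i ((1 + pm1 (b i) * x i) / 2).

Lemma sum_sets (y : 'I_n -> R) :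
  \sum_(S : {set 'I_n}) \prod_(i in S) y i = \prod_i (y i + 1).
Proof.
rewrite bigA_distr; apply: eq_bigr => S _.
by rewrite big_mkcond.
Qed.

Lemma FE_w (c : clause n) (x : 'I_n -> R) :
  FE c x = \sum_b clause_val c b * w b x.
Proof.
rewrite /FE /fourier_coef.
under eq_bigr => S _ do rewrite big_distrr /= big_distrl /=.
rewrite exchange_big /=. apply: eq_big => // b _.
rewrite /w.
have -> : \prod_i ((1 + pm1 (b i) * x i) / 2) =
   (2 ^ n)%:R^-1 * \prod_i (pm1 (b i) * x i + 1).
  rewrite big_split /= prodr_const card_ord mulrC; congr (_ * _).
    by rewrite natrX exprVn.
  by apply: eq_bigr => i _; rewrite addrC.
rewrite -sum_sets big_distrr big_distrr /=; apply: eq_bigr => S _.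
by rewrite big_split /=; ring.
Qed.

Lemma pm1_sq (b : bool) : pm1 b * pm1 b = 1 :> R.
Proof. by case: b; rewrite /pm1 ?mulrNN mulr1. Qed.

Lemma w_ge0 b x : in_cube x -> 0 <= w b x.
Proof.
move=> hx; apply: prodr_ge0 => i _; apply: divr_ge0 => //.
have /andP[h1 h2] := hx i.
by rewrite /pm1; case: (b i); rewrite ?mulN1r ?mul1r; lra.
Qed.

Lemma w_sum x : \sum_b w b x = 1.
Proof.
rewrite /w -(bigA_distr_bigA (fun i (j : bool) => (1 + pm1 j * x i) / 2)) /=.
apply: big1 => i _; rewrite big_bool /pm1 /=. lra.
Qed.

Lemma w_pt b (a : assignment n) : w b (fun i => pm1 (a i)) = (b == a)%:R.
Proof.
rewrite /w; case: eqP => [->|hne].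
  apply: big1 => i _; rewrite pm1_sq; lra.
have [i hi] : exists i, b i != a i.
  apply/existsP; rewrite -negb_forall; apply/negP => /forallP h.
  by apply: hne; apply/ffunP => i; apply/eqP.
rewrite (bigD1 i) //=.
suff -> : (1 + pm1 (b i) * pm1 (a i)) / 2 = 0 :> R by rewrite mul0r.
move: hi; rewrite /pm1.
by case: (b i); case: (a i) => //= _; lra.
Qed.

Lemma w_pos x : in_cube x -> 0 < w [ffun i => x i < 0] x.
Proof.
move=> hx; apply: prodr_gt0 => i _; rewrite ffunE; apply: divr_gt0 => //.
have /andP[h1 h2] := hx i.
by rewrite /pm1; case: (ltrP (x i) 0) => h; rewrite ?mulN1r ?mul1r; lra.
Qed.

Lemma FE_pt c (a : assignment n) : FE c (fun i => pm1 (a i)) = clause_val c a :> R.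
Proof.
rewrite FE_w (bigD1 a) //= w_pt eqxx mulr1 big1 ?addr0 //.
by move=> b hb; rewrite w_pt (negbTE hb) mulr0.
Qed.

Lemma FE_ge (x : 'I_n -> R) (c : clause n) : in_cube x -> -1 <= FE c x.
Proof.
move=> hx; rewrite FE_w -subr_ge0 opprK.
rewrite -[X in _ + X](w_sum x) -big_split /=.
apply: sumr_ge0 => b _; rewrite -{2}[w b x]mul1r -mulrDl.
apply: mulr_ge0; last exact: w_ge0.
by rewrite /clause_val /pm1; case: clause_sat; lra.
Qed.

Lemma FE_eq (x : 'I_n -> R) (c : clause n) : in_cube x -> FE c x = -1 -> clause_sat c [ffun i => x i < 0].
Proof.
move=> hx; rewrite FE_w => h.
have : \sum_b (clause_val c b + 1) * w b x = 0.
  under eq_bigr => b _ do rewrite mulrDl mul1r.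
  by rewrite big_split /= w_sum h addNr.
move/eqP; rewrite psumr_eq0; last first.
  move=> b _; apply: mulr_ge0; last exact: w_ge0.
  by rewrite /clause_val /pm1; case: clause_sat; lra.
move/allP => /(_ [ffun i => x i < 0] (mem_index_enum _)) /=.
rewrite mulf_eq0 (gt_eqF (w_pos x hx)) orbF /clause_val /pm1.
by case: clause_sat => //; rewrite (_ : 1 + 1 = 2 :> R) //; rewrite pnatr_eq0.
Qed.
End S.
Lemma F_cons (R : realType) n (c : clause n) f (x : 'I_n -> R) :
  F_f (c :: f) x = FE c x + F_f f x.
Proof. by rewrite /F_f big_cons. Qed.

Lemma F_ge (R : realType) n (f : seq (clause n)) (x : 'I_n -> R) :
  in_cube x -> - (size f)%:R <= F_f f x.
Proof.
move=> hx; elim: f => [|c f IH]; first by rewrite /F_f big_nil oppr0.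
rewrite F_cons /= -addn1 natrD opprD addrC; apply: lerD => //.
exact: (@FE_ge R n x c hx).
Qed.

Lemma F_eq (R : realType) n (f : seq (clause n)) (x : 'I_n -> R) :
  in_cube x -> F_f f x = - (size f)%:R ->
  all (fun c => clause_sat c [ffun i => x i < 0]) f.
Proof.
move=> hx; elim: f => [|c f IH] //.
rewrite F_cons /= -addn1 natrD opprD => h.
have h1 := @FE_ge R n x c hx; have h2 := @F_ge R n f x hx.
have e1 : FE c x = -1 by lra.
have e2 : F_f f x = - (size f)%:R by lra.
by rewrite (@FE_eq R n x c hx e1) (IH e2).
Qed.

Theorem theorem2 (R : realType) (n : nat) (f : seq (clause n)) :
  satisfiable f <->
  ((exists x : 'I_n -> R, in_cube x /\ F_f f x = - (size f)%:R) /\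
   (forall x : 'I_n -> R, in_cube x -> - (size f)%:R <= F_f f x)).
Proof.
split; last first.
  move=> [[x [hx hF]] _]; exists [ffun i => x i < 0]; exact: (@F_eq R n f x hx hF).
move=> [a ha]; split; last by move=> x hx; exact: (@F_ge R n f x hx).
exists (fun i => pm1 (a i)); split.
  by move=> i; rewrite /pm1; case: (a i); apply/andP; split; lra.
elim: f ha => [|c f IH] /=; first by rewrite /F_f big_nil oppr0.
move/andP=> [hc hf]; rewrite F_cons (@FE_pt R n c a) /clause_val hc (IH hf) /pm1.
by rewrite -addn1 natrD opprD addrC.
Qed.
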